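(* Let $R(\bar x,\bar y)$ be a definable relation, with $\bar x=(x_1,\dots,x_k)$ and $\bar y=(y_1,\dots,y_l)$. Then there is a natural number $K$ such that for every $\bar a\in\mathcal M^k$, $$\lnot(\exists_{>K}\bar y)R(\bar a,\bar y)\ \lor\ \lnot(\exists_{>K}\bar y)\lnot R(\bar a,\bar y).$$
   Context: $\mathcal M$ denotes the $\mathbb Q$-vector space $\mathbb Q^{<\omega}$ of all sequences $(v_0,v_1,\dots)$ of rationals with only finitely many nonzero terms, with zero vector $\vec 0$, regarded as the structure $\langle\mathcal M;+\rangle$. A relation on $\mathcal M$ is definable if it is first-order definable without parameters in $\langle\mathcal M;+\rangle$. The quantifier $(\exists_{>K}y)Q(y)$ means ''there are at least $K+1$ pairwise distinct $y$ with $Q(y)$''; for tuples it is defined inductively by $(\exists_{>K}y_1,\dots,y_l)Q(\bar y):=(\exists_{>K}y_1)(\exists_{>K}y_2,\dots,y_l)Q(\bar y)$. *)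

(* Defs.v *)
From HB Require Import structures.
From mathcomp Require Import all_boot all_order all_algebra.
Set Implicit Arguments. Unset Strict Implicit. Unset Printing Implicit Defensive.
Import Order.TTheory GRing.Theory Num.Theory.
Local Open Scope ring_scope.

(* The Q-vector space Q^{<omega} of finitely supported rational sequences,
   represented by {poly rat}: a polynomial is exactly its (finitely supported)
   sequence of coefficients (v_0, v_1, ...), and polynomial addition is
   coordinatewise addition.  Only the additive structure is used below. *)
Definition M : Type := {poly rat}.

Inductive term : Type :=
  | Tvar : nat -> term
  | Tadd : term -> term -> term.

Inductive formula : Type :=
  | Feq : term -> term -> formula
  | Fnot : formula -> formula
  | Fand : formula -> formula -> formula
  | For : formula -> formula -> formula
  | Fex : nat -> formula -> formula
  | Fall : nat -> formula -> formula.

Fixpoint teval (e : nat -> M) (t : term) : M :=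
  match t with
  | Tvar n => e n
  | Tadd t1 t2 => teval e t1 + teval e t2
  end.

Definition upd (e : nat -> M) (n : nat) (a : M) : nat -> M :=
  fun i => if i == n then a else e i.

Fixpoint holds (e : nat -> M) (f : formula) : Prop :=
  match f with
  | Feq t1 t2 => teval e t1 = teval e t2
  | Fnot g => ~ holds e g
  | Fand g h => holds e g /\ holds e h
  | For g h => holds e g \/ holds e h
  | Fex n g => exists a : M, holds (upd e n a) g
  | Fall n g => forall a : M, holds (upd e n a) g
  end.

Definition env_of (s : seq M) : nat -> M := fun i => nth 0 s i.

(* R(x_1..x_k, y_1..y_l) is definable without parameters in <M;+>:
   variables 0..k-1 stand for x, k..k+l-1 for y. *)
Definition definable (k l : nat) (R : k.-tuple M -> l.-tuple M -> Prop) : Prop :=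
  exists phi : formula, forall (a : k.-tuple M) (b : l.-tuple M),
    R a b <-> holds (env_of (a ++ b)) phi.

Definition exists_gt1 (K : nat) (Q : M -> Prop) : Prop :=
  exists s : seq M, uniq s /\ size s = K.+1 /\ forall y, y \in s -> Q y.

Fixpoint exists_gt (K l : nat) : (l.-tuple M -> Prop) -> Prop :=
  match l return (l.-tuple M -> Prop) -> Prop with
  | 0 => fun Q => Q [tuple]
  | l'.+1 => fun Q =>
      exists_gt1 K (fun y => exists_gt K (fun t : l'.-tuple M => Q (cons_tuple y t)))
  end.

(* Main.v *)
Require Import Defs.
From HB Require Import structures.
From mathcomp Require Import all_boot all_order all_algebra.
From Stdlib Require Import Classical FunctionalExtensionality.
Set Implicit Arguments. Unset Strict Implicit. Unset Printing Implicit Defensive.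
Import Order.TTheory GRing.Theory Num.Theory.
Local Open Scope ring_scope.

Definition lf := seq (nat * rat).

Fixpoint leval (e : nat -> M) (L : lf) : M :=
  match L with [::] => 0 | p :: L' => p.2 *: e p.1 + leval e L' end.
Fixpoint lcoef (y : nat) (L : lf) : rat :=
  match L with [::] => 0 | p :: L' => (if p.1 == y then p.2 else 0) + lcoef y L' end.
Fixpoint lrem (y : nat) (L : lf) : lf :=
  match L with [::] => [::] | p :: L' => if p.1 == y then lrem y L' else p :: lrem y L' end.
Definition lscale (a : rat) (L : lf) : lf := [seq (p.1, a * p.2) | p <- L].

Lemma leval_cat e L1 L2 : leval e (L1 ++ L2) = leval e L1 + leval e L2.
Proof. elim: L1 => [|p L IH] /=; first by rewrite add0r. by rewrite IH addrA. Qed.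

Lemma leval_scale e a L : leval e (lscale a L) = a *: leval e L.
Proof. elim: L => [|p L IH] /=; first by rewrite scaler0. by rewrite IH scalerDr scalerA. Qed.

Lemma leval_split e y L : leval e L = lcoef y L *: e y + leval e (lrem y L).
Proof.
elim: L => [|[i q] L IH] /=; first by rewrite scale0r addr0.
case: eqP => [->|_]; rewrite IH.
  by rewrite scalerDl addrA.
by rewrite add0r addrCA.
Qed.

Lemma upd_same e y (b : M) : upd e y b y = b.
Proof. by rewrite /upd eqxx. Qed.
Lemma upd_other e y (b : M) i : i != y -> upd e y b i = e i.
Proof. by rewrite /upd => /negbTE ->. Qed.

Lemma leval_lrem_upd e y b L : leval (upd e y b) (lrem y L) = leval e (lrem y L).
Proof.
elim: L => [|[i q] L IH] //=.
case: eqP => [_|/eqP ne] /=; by rewrite IH ?upd_other.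
Qed.

Lemma leval_upd_y e y b L : leval (upd e y b) L = lcoef y L *: b + leval e (lrem y L).
Proof. by rewrite (leval_split _ y) upd_same leval_lrem_upd. Qed.

Lemma leval_upd_coef0 e y b L : lcoef y L = 0 -> leval (upd e y b) L = leval e L.
Proof. move=> h. by rewrite leval_upd_y (leval_split e y L) h !scale0r. Qed.

Definition lsubst y L' L := lrem y L ++ lscale (lcoef y L) L'.
Lemma leval_lsubst e y L' L : leval e (lsubst y L' L) = leval (upd e y (leval e L')) L.
Proof. by rewrite /lsubst leval_cat leval_scale leval_upd_y addrC. Qed.

Definition tp y L := lscale (- (lcoef y L)^-1) (lrem y L).
Lemma leval_upd_root e y b L : lcoef y L != 0 ->
  (leval (upd e y b) L = 0 <-> b = leval e (tp y L)).
Proof.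
move=> nz; rewrite leval_upd_y /tp leval_scale.
split=> [h|->].
- have : lcoef y L *: b = - leval e (lrem y L).
    by apply/eqP; rewrite -addr_eq0; apply/eqP.
  move/(congr1 (fun v => (lcoef y L)^-1 *: v)); rewrite scalerA mulVf // scale1r => ->.
  by rewrite scalerN scaleNr.
- by rewrite scalerA mulrN mulfV // scaleN1r addNr.
Qed.

Inductive qf := QEq of lf | QNot of qf | QAnd of qf & qf | QOr of qf & qf.
Fixpoint qeval e (f : qf) : Prop :=
  match f with
  | QEq L => leval e L = 0
  | QNot g => ~ qeval e g
  | QAnd g h => qeval e g /\ qeval e h
  | QOr g h => qeval e g \/ qeval e h
  end.
Definition QFalse := QNot (QEq [::]).
Fixpoint tests y f : seq lf :=
  match f with
  | QEq L => if lcoef y L == 0 then [::] else [:: tp y L]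
  | QNot g => tests y g
  | QAnd g h => tests y g ++ tests y h
  | QOr g h => tests y g ++ tests y h
  end.
Fixpoint qgen y f :=
  match f with
  | QEq L => if lcoef y L == 0 then QEq L else QFalse
  | QNot g => QNot (qgen y g)
  | QAnd g h => QAnd (qgen y g) (qgen y h)
  | QOr g h => QOr (qgen y g) (qgen y h)
  end.
Fixpoint qsubst y L' f :=
  match f with
  | QEq L => QEq (lsubst y L' L)
  | QNot g => QNot (qsubst y L' g)
  | QAnd g h => QAnd (qsubst y L' g) (qsubst y L' h)
  | QOr g h => QOr (qsubst y L' g) (qsubst y L' h)
  end.

Lemma qsubst_spec e y L' f : qeval e (qsubst y L' f) <-> qeval (upd e y (leval e L')) f.
Proof.
elim: f => [L|g IH|g IHg h IHh|g IHg h IHh] /=.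
- by rewrite leval_lsubst.
- tauto.
- tauto.
- tauto.
Qed.

Lemma qgen_spec e y b f : b \notin map (leval e) (tests y f) ->
  (qeval (upd e y b) f <-> qeval e (qgen y f)).
Proof.
elim: f => [L|g IH|g IHg h IHh|g IHg h IHh] /=.
- have [c0|c0] := eqVneq (lcoef y L) 0.
  + by rewrite leval_upd_coef0.
  + rewrite inE => hb. rewrite leval_upd_root //=.
    split=> [hbeq|h]; [by move: hb; rewrite hbeq eqxx | by exfalso; apply h].
- move=> hb; have := IH hb; tauto.
- rewrite map_cat mem_cat negb_or => /andP [hg hh]; have := IHg hg; have := IHh hh; tauto.
- rewrite map_cat mem_cat negb_or => /andP [hg hh]; have := IHg hg; have := IHh hh; tauto.
Qed.

Definition qex y f := foldr (fun t acc => QOr (qsubst y t f) acc) (qgen y f) (tests y f).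

Lemma foldr_spec e y f ts :
  qeval e (foldr (fun t acc => QOr (qsubst y t f) acc) (qgen y f) ts) <->
  (exists2 t, t \in ts & qeval e (qsubst y t f)) \/ qeval e (qgen y f).
Proof.
elim: ts => [|t ts IH] /=.
- split; first by right. by case=> // -[t]; rewrite in_nil.
- split.
  + case=> [h|/IH[[t' ht' h]|h]].
    * left; exists t => //; exact: mem_head.
    * left; exists t' => //; by rewrite inE ht' orbT.
    * by right.
  + case=> [[t' ht' h]|h].
    * move: ht'; rewrite inE => /orP[/eqP eq|ht'].
        by left; rewrite -eq.
      right; apply/IH; left; by exists t'.
    * right; apply/IH; by right.
Qed.

Lemma fresh (s : seq M) : exists N, forall x, x \in s -> (size x <= N)%N.
Proof.
elim: s => [|x s [N HN]]; first by exists 0%N.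
exists (maxn (size x) N) => z; rewrite inE => /orP[/eqP ->|/HN h].
- exact: leq_maxl.
- exact: leq_trans h (leq_maxr _ _).
Qed.

Lemma Xn_notin (s : seq M) N i : (forall x, x \in s -> (size x <= N)%N) -> 'X^(N + i) \notin s.
Proof.
move=> HN; apply/negP => /HN; by rewrite size_polyXn ltnNge leq_addr.
Qed.

Lemma qex_spec e y f : qeval e (qex y f) <-> exists b, qeval (upd e y b) f.
Proof.
split.
- move/foldr_spec; case=> [[t _ h]|h].
  + exists (leval e t); exact/qsubst_spec.
  + have [N HN] := fresh (map (leval e) (tests y f)).
    have hb := @Xn_notin _ N 0%N HN.
    exists ('X^(N + 0)); exact/(qgen_spec hb).
- case=> b h; apply/foldr_spec.
  case: (boolP (b \in map (leval e) (tests y f))) => hb.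
  + case/mapP: hb => t ht eb.
    left; exists t => //; apply/qsubst_spec; by rewrite -eb.
  + right; exact/(qgen_spec hb).
Qed.

Fixpoint tlf (t : term) : lf :=
  match t with Tvar n => [:: (n, 1)] | Tadd t1 t2 => tlf t1 ++ tlf t2 end.

Lemma teval_tlf e t : teval e t = leval e (tlf t).
Proof.
elim: t => [n|t1 IH1 t2 IH2] /=; [by rewrite scale1r addr0 | by rewrite leval_cat IH1 IH2].
Qed.

Lemma translate (f : formula) : exists g, forall e, holds e f <-> qeval e g.
Proof.
elim: f => [t1 t2|g [p H]|g [p1 H1] h [p2 H2]|g [p1 H1] h [p2 H2]|n g [p H]|n g [p H]].
- exists (QEq (tlf t1 ++ lscale (-1) (tlf t2))) => e /=.
  rewrite leval_cat leval_scale scaleN1r !teval_tlf.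
  split=> [->|h]; first by rewrite subrr.
  apply/eqP; rewrite -subr_eq0; exact/eqP.
- exists (QNot p) => e /=; have := H e; tauto.
- exists (QAnd p1 p2) => e /=; have := H1 e; have := H2 e; tauto.
- exists (QOr p1 p2) => e /=; have := H1 e; have := H2 e; tauto.
- exists (qex n p) => e /=.
  split=> [[a ha]|/qex_spec [a ha]].
  + apply/qex_spec; exists a; exact/H.
  + exists a; exact/H.
- exists (QNot (qex n (QNot p))) => e /=. split.
  + move=> h /qex_spec [a ha]; apply: ha; exact/H.
  + move=> h a; apply/H; apply: NNPP => ha; apply: h; apply/qex_spec; exists a => /=; exact ha.
Qed.

Lemma l1 K e y f : (size (tests y f) <= K)%N ->
  (exists_gt1 K (fun b => qeval (upd e y b) f) <-> qeval e (qgen y f)).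
Proof.
move=> hK; split.
- case=> s [us [ss hs]]. apply: NNPP => ng.
  have sub : {subset s <= map (leval e) (tests y f)}.
    move=> b bs; apply: contraT => hb.
    exfalso; apply: ng; apply/(qgen_spec hb); exact: hs.
  have := uniq_leq_size us sub. rewrite size_map ss => h.
  have := leq_trans h hK. by rewrite ltnn.
- move=> hg. have [N HN] := fresh (map (leval e) (tests y f)).
  exists [seq 'X^(N + i) | i <- iota 0 K.+1]; split; [|split].
  + rewrite map_inj_uniq ?iota_uniq // => i j /= eq.
    have := congr1 (fun p : {poly rat} => size p) eq.
    by rewrite /= !size_polyXn => -[] /addnI.
  + by rewrite size_map size_iota.
  + move=> b /mapP [i _ ->]. exact/(qgen_spec (@Xn_notin _ N i HN)).
Qed.

Fixpoint Eiter K (ys : seq nat) f (e : nat -> M) : Prop :=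
  match ys with
  | [::] => qeval e f
  | y :: ys' => exists_gt1 K (fun b => Eiter K ys' f (upd e y b))
  end.
Fixpoint gen (ys : seq nat) f :=
  match ys with [::] => f | y :: ys' => qgen y (gen ys' f) end.
Fixpoint K0 (ys : seq nat) f : nat :=
  match ys with [::] => 0%N | y :: ys' => maxn (K0 ys' f) (size (tests y (gen ys' f))) end.

Lemma exists_gt1_iff K (Q Q' : M -> Prop) :
  (forall y, Q y <-> Q' y) -> (exists_gt1 K Q <-> exists_gt1 K Q').
Proof.
move=> h; split=> -[s [u [sz hs]]]; exists s; split=> //; split=> // y ys.
- by apply (proj1 (h y)); apply: hs.
- by apply (proj2 (h y)); apply: hs.
Qed.

Lemma Eiter_gen K ys f : (K0 ys f <= K)%N -> forall e, Eiter K ys f e <-> qeval e (gen ys f).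
Proof.
elim: ys => [|y ys IH] //= hK e.
have h1 : (K0 ys f <= K)%N := leq_trans (leq_maxl _ _) hK.
have h2 : (size (tests y (gen ys f)) <= K)%N := leq_trans (leq_maxr _ _) hK.
apply: (iff_trans _ (@l1 K e y _ h2)).
apply: exists_gt1_iff => b; exact: IH.
Qed.

Lemma gen_not ys f : gen ys (QNot f) = QNot (gen ys f).
Proof. by elim: ys => [|y ys IH] //=; rewrite IH. Qed.

Lemma exists_gt_iff K l : forall (Q Q' : l.-tuple M -> Prop),
  (forall t, Q t <-> Q' t) -> (exists_gt K Q <-> exists_gt K Q').
Proof.
elim: l => [|l IH] Q Q' h /=; first exact: h.
apply: exists_gt1_iff => y; apply: IH => t; exact: h.
Qed.

Lemma link K f l : forall p : seq M,
  exists_gt K (fun b : l.-tuple M => qeval (env_of (p ++ b)) f) <->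
  Eiter K (iota (size p) l) f (env_of p).
Proof.
elim: l => [|l IH] p /=.
- by rewrite cats0.
- apply: exists_gt1_iff => y.
  have E : upd (env_of p) (size p) y = env_of (rcons p y).
    apply: functional_extensionality => i; rewrite /upd /env_of nth_rcons.
    case: ltngtP => // h.
    by rewrite nth_default // ltnW.
  have := IH (rcons p y); rewrite size_rcons -E => IH'.
  apply: (iff_trans _ IH').
  apply: exists_gt_iff => t /=; by rewrite cat_rcons.
Qed.

Local Close Scope ring_scope.

Theorem mainTheorem1 (k l : nat) (R : k.-tuple M -> l.-tuple M -> Prop) :
  definable R ->
  exists K : nat, forall a : k.-tuple M,
    ~ exists_gt K (R a) \/ ~ exists_gt K (fun b => ~ R a b).
Proof.
case=> phi Hphi. have [psi Hpsi] := translate phi.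
pose ys := iota k l.
exists (maxn (K0 ys psi) (K0 ys (QNot psi))) => a.
have L1 := link (maxn (K0 ys psi) (K0 ys (QNot psi))) psi l a.
have L2 := link (maxn (K0 ys psi) (K0 ys (QNot psi))) (QNot psi) l a.
rewrite size_tuple in L1 L2.
have G1 := Eiter_gen (leq_maxl (K0 ys psi) (K0 ys (QNot psi))) (env_of a).
have G2 := Eiter_gen (leq_maxr (K0 ys psi) (K0 ys (QNot psi))) (env_of a).
rewrite gen_not /= in G2.
have E1 : exists_gt (maxn (K0 ys psi) (K0 ys (QNot psi))) (R a) <->
    exists_gt (maxn (K0 ys psi) (K0 ys (QNot psi)))
      (fun b : l.-tuple M => qeval (env_of (a ++ b)) psi).
  apply: exists_gt_iff => b; exact: iff_trans (Hphi a b) (Hpsi _).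
have E2 : exists_gt (maxn (K0 ys psi) (K0 ys (QNot psi))) (fun b => ~ R a b) <->
    exists_gt (maxn (K0 ys psi) (K0 ys (QNot psi)))
      (fun b : l.-tuple M => qeval (env_of (a ++ b)) (QNot psi)).
  apply: exists_gt_iff => b /=; have := Hphi a b; have := Hpsi (env_of (a ++ b)); tauto.
case: (classic (qeval (env_of a) (gen ys psi))) => h.
- right; tauto.
- left; tauto.
Qed.
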